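(* Let $0<\beta<\gamma\le1$, let $m\ge0$ be an integer and let $\theta=(k_r)$ be a lacunary sequence. Then $S_\theta^\beta(F,\Delta^m)\subset S_\theta^\gamma(F,\Delta^m)$, and the inclusion is strict.
   Context: A fuzzy number is a map $X:\mathbb{R}\to[0,1]$ which is normal, fuzzy convex, upper semicontinuous, with compact closure of $\{t:X(t)>0\}$; $L(\mathbb{R})$ is the set of fuzzy numbers. Level sets $[X]^\alpha=\{t:X(t)\ge\alpha\}$ ($\alpha\in(0,1]$), $[X]^0=\overline{\{t:X(t)>0\}}$, are compact intervals $[u^\alpha,v^\alpha]$. Subtraction: $[X-Y]^\alpha=[u_1^\alpha-v_2^\alpha,v_1^\alpha-u_2^\alpha]$ where $[X]^\alpha=[u_1^\alpha,v_1^\alpha]$, $[Y]^\alpha=[u_2^\alpha,v_2^\alpha]$. Metric: $d(X,Y)=\sup_{\alpha\in[0,1]}\max\{|u_1^\alpha-u_2^\alpha|,|v_1^\alpha-v_2^\alpha|\}$. For a sequence $X=(X_k)$ in $L(\mathbb{R})$: $(\Delta^0X)_k=X_k$, $(\Delta^1X)_k=X_k-X_{k+1}$, $(\Delta^mX)_k=(\Delta^1(\Delta^{m-1}X))_k$; write $\Delta^mX_k$. A lacunary sequence is an increasing integer sequence $\theta=(k_r)_{r\ge0}$ with $k_0=0$, $h_r=k_r-k_{r-1}\to\infty$; $I_r=(k_{r-1},k_r]$. For $\beta\in(0,1]$, $S_\theta^\beta(F,\Delta^m)$ is the set of sequences $X$ of fuzzy numbers for which there is $X_0\in L(\mathbb{R})$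 with $\lim_{r\to\infty}\frac{1}{h_r^\beta}|\{k\in I_r:d(\Delta^mX_k,X_0)\ge\varepsilon\}|=0$ for every $\varepsilon>0$. *)

(* Defs.v *)
From HB Require Import structures.
From mathcomp Require Import all_boot all_order all_algebra.
From mathcomp Require Import all_classical all_reals all_analysis.
Set Implicit Arguments. Unset Strict Implicit. Unset Printing Implicit Defensive.
Import Order.TTheory GRing.Theory Num.Theory.
Import numFieldNormedType.Exports.
Local Open Scope classical_set_scope.
Local Open Scope ring_scope.

Section Fuzzy.
Variable R : realType.

Definition level (X : R -> R) (a : R) : set R :=
  if a == 0 then closure [set t | 0 < X t] else [set t | a <= X t].

Definition lower (X : R -> R) (a : R) : R := inf (level X a).
Definition upper (X : R -> R) (a : R) : R := sup (level X a).

Definition is_fuzzy (X : R -> R) : Prop :=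
  [/\ (forall t, 0 <= X t <= 1),
      (exists t, X t = 1),
      (forall s t l, 0 <= l <= 1 -> Num.min (X s) (X t) <= X (l * s + (1 - l) * t)),
      (forall t e, 0 < e -> \forall s \near t, X s < X t + e)
    & compact (closure [set t | 0 < X t])].

(* X - Y : the fuzzy number whose a-level set is
   [u1^a - v2^a, v1^a - u2^a]; its membership function is recovered as
   t |-> sup of the levels a in (0,1] whose level set contains t (0 if none) *)
Definition fsub (X Y : R -> R) : R -> R := fun t =>
  sup ([set a | 0 < a <= 1 /\ lower X a - upper Y a <= t <= upper X a - lower Y a]
       `|` [set 0]).

Fixpoint delta (m : nat) (X : nat -> R -> R) : nat -> R -> R :=
  match m with
  | 0 => X
  | m'.+1 => fun k => fsub (delta m' X k) (delta m' X k.+1)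
  end.

Definition fdist (X Y : R -> R) : R :=
  sup [set Num.max `|lower X a - lower Y a| `|upper X a - upper Y a| | a in `[0, 1]].

End Fuzzy.

Definition lacunary (theta : nat -> nat) : Prop :=
  [/\ theta 0 = 0%N,
      (forall r, (theta r < theta r.+1)%N)
    & (forall M : nat, exists N : nat, forall r, (N <= r)%N -> (M <= theta r.+1 - theta r)%N)].

Definition hr (theta : nat -> nat) (r : nat) : nat := (theta r - theta r.-1)%N.

Definition bad_count (R : realType) (theta : nat -> nat) (m : nat)
    (X : nat -> R -> R) (X0 : R -> R) (eps : R) (r : nat) : nat :=
  count (fun k => eps <= fdist (delta m X k) X0)
        (index_iota (theta r.-1).+1 (theta r).+1).

Definition S_theta (R : realType) (beta : R) (m : nat) (theta : nat -> nat)
  : set (nat -> R -> R) :=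
  [set X | (forall k, is_fuzzy (X k)) /\
     exists X0, is_fuzzy X0 /\
       forall eps : R, 0 < eps ->
         (fun r => (bad_count theta m X X0 eps r)%:R / ((hr theta r)%:R `^ beta))
           @ \oo --> (0 : R)].

(* Main.v *)
Require Import Defs.
From mathcomp Require Import all_boot all_order all_algebra.
From mathcomp Require Import all_classical all_reals all_analysis.
From mathcomp Require Import lra zify.
Import Order.TTheory GRing.Theory Num.Theory.
Import numFieldNormedType.Exports.
Set Implicit Arguments. Unset Strict Implicit. Unset Printing Implicit Defensive.
Local Open Scope classical_set_scope.
Local Open Scope ring_scope.

Section Pts.
Variable R : realType.

Definition pt (c : R) : R -> R := fun t => if t == c then 1 else 0.

Lemma supp_pt c : [set t | 0 < pt c t] = [set c].
Proof.
apply/seteqP; split => t /=; rewrite /pt.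
  by case: eqP => // _; rewrite ltxx.
by move=> ->; rewrite eqxx ltr01.
Qed.

Lemma closure_pt c : closure [set t | 0 < pt c t] = [set c].
Proof.
by rewrite supp_pt -(proj1 (closure_id _) (compact_closed (@Rhausdorff R) (@compact_set1 _ c))).
Qed.

Lemma level_pt c a : 0 <= a <= 1 -> level (pt c) a = [set c].
Proof.
move=> /andP[a0 a1]; rewrite /level; case: eqP => [_|/eqP an0]; first exact: closure_pt.
apply/seteqP; split => t /=; rewrite /pt.
  case: eqP => // _ H; exfalso; have : a <= 0 by [].
  by rewrite leNgt lt_neqAle eq_sym an0 a0.
by move=> ->; rewrite eqxx.
Qed.

Lemma i01 : 0 <= (1:R) <= 1. Proof. by rewrite ler01 lexx. Qed.

Lemma lower_pt c a : 0 <= a <= 1 -> lower (pt c) a = c.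
Proof. by move=> h; rewrite /lower level_pt // inf1. Qed.
Lemma upper_pt c a : 0 <= a <= 1 -> upper (pt c) a = c.
Proof. by move=> h; rewrite /upper level_pt // sup1. Qed.

Lemma fsub_pt c d : fsub (pt c) (pt d) = pt (c - d).
Proof.
apply/funext => t; rewrite /fsub.
set S := (X in sup X).
have hub : has_ubound S.
  exists 1 => x [[/andP[_ ->] _]|->] //; exact: ler01.
have S0 : S 0 by right.
rewrite /pt; case: eqP => [tE|/eqP nt].
  apply/le_anti/andP; split.
    apply: ge_sup; first by exists 0.
    by move=> x [[/andP[_ ->] _]|->] //; exact: ler01.
  apply: (ub_le_sup hub); left; split; first by rewrite ltr01 lexx.
  by rewrite !lower_pt ?i01 // !upper_pt ?i01 // tE lexx.
apply/le_anti/andP; split.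
  apply: ge_sup; first by exists 0.
  move=> x [[/andP[x0 x1]]|->//].
  have hx : 0 <= x <= 1 by rewrite (ltW x0) x1.
  rewrite !lower_pt // !upper_pt // => /andP[h1 h2].
  by exfalso; move: nt; rewrite eq_le h1 h2.
exact: (ub_le_sup hub).
Qed.

Definition dif (x : nat -> R) k := x k - x k.+1.
Fixpoint difn m (x : nat -> R) := match m with 0 => x | m'.+1 => dif (difn m' x) end.

Lemma delta_pt m (x : nat -> R) k : delta m (fun k => pt (x k)) k = pt (difn m x k).
Proof.
elim: m k => [//|m IH] k /=.
by rewrite !IH fsub_pt.
Qed.

Definition antid (y : nat -> R) k := - \sum_(j < k) y j.

Lemma dif_antid y : dif (antid y) = y.
Proof.
apply/funext => k; rewrite /dif /antid big_ord_recr /=.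
by rewrite opprK addrA addNr add0r.
Qed.

Lemma difnS m x : difn m.+1 x = difn m (dif x).
Proof. by elim: m => [//|m IH] /=; rewrite -IH. Qed.

Lemma difn_antid m y : difn m (iter m antid y) = y.
Proof.
elim: m => [//|m IH].
by rewrite difnS /= dif_antid.
Qed.

Lemma min_helper (a b z : R) : (a <= 0) \/ (b <= 0) -> 0 <= z -> Num.min a b <= z.
Proof. by move=> [h|h] z0; rewrite ge_min (le_trans h z0) ?orbT. Qed.

Lemma pt_fuzzy c : is_fuzzy (pt c).
Proof.
split.
- by move=> t; rewrite /pt; case: eqP => _; rewrite ?lexx ?ler01.
- by exists c; rewrite /pt eqxx.
- move=> s t l _; rewrite /pt.
  case: (eqVneq s c) => [->|sc]; case: (eqVneq t c) => [->|tc].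
  + have -> : l * c + (1 - l) * c = c by rewrite mulrBl mul1r addrC subrK.
    by rewrite eqxx minxx.
  1-3: try rewrite (negbTE sc); try rewrite (negbTE tc).
  1-3: rewrite ge_min; apply/orP; first [by right; case: ifP => _; rewrite ?ler01 ?lexx | by left; case: ifP => _; rewrite ?ler01 ?lexx].
- move=> t e e0; rewrite /pt; case: (eqVneq t c) => [->|tc].
    apply: filterE => s; case: ifP => _; rewrite ?ltrDl //.
    by rewrite (le_lt_trans ler01) // ltrDl.
  have : nbhs t (~` [set c]).
    apply: open_nbhs_nbhs; split.
      by rewrite openC; exact: (compact_closed (@Rhausdorff R) (@compact_set1 _ c)).
    by move=> /= tE; move: tc; rewrite tE eqxx.
  apply: filterS => s /= sc.
  by case: eqP => [/sc//|_]; rewrite add0r.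
- by rewrite closure_pt; exact: compact_set1.
Qed.

Lemma fdist_self (X : R -> R) : fdist X X <= 0.
Proof.
rewrite /fdist; apply: ge_sup.
  by exists (Num.max `|lower X 0 - lower X 0| `|upper X 0 - upper X 0|), 0 => //=;
    rewrite in_itv /= lexx ler01.
by move=> x [a _ <-]; rewrite !subrr normr0 maxxx.
Qed.

Lemma compact_bnd (A : set R) : compact A -> exists M, forall x, A x -> `|x| <= M.
Proof.
move=> /compact_bounded [M0 [_ HM]]; exists (M0 + 1); apply: HM.
by rewrite ltrDl ltr01.
Qed.

Lemma bnd_sup_inf (E : set R) M : E !=set0 -> (forall x, E x -> `|x| <= M) ->
  `|sup E| <= M /\ `|inf E| <= M.
Proof.
move=> [e Ee] HM.
have := HM _ Ee; rewrite ler_norml => /andP[e1 e2].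
have hub : has_ubound E by exists M => x /HM; rewrite ler_norml => /andP[].
have hlb : has_lbound E by exists (- M) => x /HM; rewrite ler_norml => /andP[].
split; rewrite ler_norml; apply/andP; split.
- by rewrite (le_trans e1) //; exact: (ub_le_sup hub).
- by apply: ge_sup; [exists e|move=> x /HM; rewrite ler_norml => /andP[]].
- by apply: lb_le_inf; [exists e|move=> x /HM; rewrite ler_norml => /andP[]].
- by rewrite (le_trans _ e2) //; exact: (ge_inf hlb).
Qed.

Lemma fuzzy_level_bnd (X : R -> R) : is_fuzzy X -> exists M,
  forall a, 0 <= a <= 1 -> `|lower X a| <= M /\ `|upper X a| <= M.
Proof.
case=> _ [t1 Xt1] _ _ /compact_bnd [M HM]; exists M => a /andP[a0 a1].
have sub : forall x, level X a x -> `|x| <= M.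
  move=> x; rewrite /level; case: eqP => [_|/eqP an0]; first exact: HM.
  move=> /= ax; apply: HM; apply: subset_closure => /=.
  by apply: lt_le_trans ax; rewrite lt_neqAle eq_sym an0 a0.
have ne : level X a !=set0.
  exists t1; rewrite /level; case: eqP => [_|_] /=; last by rewrite Xt1.
  by apply: subset_closure => /=; rewrite Xt1 ltr01.
by have [h1 h2] := bnd_sup_inf ne sub; split.
Qed.

Lemma fdist_ge c (X : R -> R) : is_fuzzy X -> `|c - lower X 1| <= fdist (pt c) X.
Proof.
move=> /fuzzy_level_bnd [M HM].
rewrite /fdist.
have hub : has_ubound [set Num.max `|lower (pt c) a - lower X a| `|upper (pt c) a - upper X a| | a in `[0, 1]].
  exists (`|c| + M) => x [a]; rewrite /= in_itv /= => ha <-.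
  rewrite lower_pt // upper_pt //; have [h1 h2] := HM a ha.
  rewrite ge_max; apply/andP; split; rewrite (le_trans (ler_normB _ _)) //;
    by rewrite lerD2l.
apply: (le_trans (y := Num.max `|lower (pt c) 1 - lower X 1| `|upper (pt c) 1 - upper X 1|)).
  by rewrite lower_pt ?i01 // le_max lexx.
apply: (ub_le_sup hub).
by exists 1; [rewrite /= in_itv /= ler01 lexx|reflexivity].
Qed.
End Pts.
Lemma count_iota_lt b s l : count (fun k => (k < b)%N) (iota s l) = minn (b - s) l.
Proof.
elim: l s => [|l IH] s /=; first by rewrite minn0.
rewrite IH; case: (ltnP s b) => h /=; lia.
Qed.

Section Comb.
Variable theta : nat -> nat.
Hypothesis lac : lacunary theta.

Lemma theta_mono : {homo theta : i j / (i <= j)%N}.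
Proof.
case: lac => _ hinc _; apply: homo_leq => //; [exact: leq_trans|by move=> i; exact: ltnW].
Qed.

Lemma theta_lt i j : (i < j)%N -> (theta i < theta j)%N.
Proof.
case: lac => _ hinc _ hij; apply: (leq_trans (hinc i)); exact: theta_mono.
Qed.

Lemma block_uniq r r' k : (0 < r)%N -> (0 < r')%N ->
  (theta r.-1 < k <= theta r)%N -> (theta r'.-1 < k <= theta r')%N -> r = r'.
Proof.
move=> r0 r'0 /andP[h1 h2] /andP[h3 h4].
case: (ltngtP r r') => // hrr.
  have : (theta r <= theta r'.-1)%N by apply: theta_mono; lia.
  lia.
have : (theta r' <= theta r.-1)%N by apply: theta_mono; lia.
lia.
Qed.

Variable nr : nat -> nat.
Hypothesis nr_le : forall r, (nr r <= hr theta r)%N.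

Definition yb k : bool := `[< exists r, (theta r.-1 < k <= theta r.-1 + nr r)%N >].

Lemma yb_block r k : (0 < r)%N -> (theta r.-1 < k <= theta r)%N ->
  yb k = (k <= theta r.-1 + nr r)%N.
Proof.
move=> r0 hk; apply/asboolP/idP => [[r' /andP[h1 h2]]|h]; last first.
  by exists r; move: hk => /andP[-> _].
have := nr_le r'; rewrite /hr => hn.
have mono' : (theta r'.-1 <= theta r')%N by apply: theta_mono; lia.
case: r' h1 h2 hn mono' => [|r'] h1 h2 hn mono'.
  by move: hn; rewrite /= subnn leqn0 => /eqP hn; move: h2; rewrite hn addn0 leqNgt h1.
have := @block_uniq r r'.+1 k r0 isT hk.
have hk' : (theta r'.+1.-1 < k <= theta r'.+1)%N by apply/andP; split => //; lia.
by move=> /(_ hk') ->.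
Qed.

Lemma count_yb r : (0 < r)%N ->
  count yb (index_iota (theta r.-1).+1 (theta r).+1) = nr r.
Proof.
move=> r0.
rewrite (@eq_in_count _ _ (fun k => (k < (theta r.-1 + nr r).+1)%N)); last first.
  move=> k; rewrite mem_index_iota => hk; rewrite (@yb_block r) //; lia.
rewrite /index_iota count_iota_lt.
have := nr_le r; rewrite /hr.
have : (theta r.-1 <= theta r)%N by apply: theta_mono; lia.
lia.
Qed.

Lemma count_nyb r : (0 < r)%N ->
  count (predC yb) (index_iota (theta r.-1).+1 (theta r).+1) = (hr theta r - nr r)%N.
Proof.
move=> r0; have := count_predC yb (index_iota (theta r.-1).+1 (theta r).+1).
rewrite count_yb // /index_iota size_iota /hr; lia.
Qed.

Lemma hr_large M : exists N, (0 < N)%N /\ forall r, (N <= r)%N -> (M <= hr theta r)%N.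
Proof.
case: lac => _ _ /(_ M) [N HN]; exists N.+1; split => // r hr.
by case: r hr => [//|r] hr; rewrite /hr /=; apply: HN.
Qed.
End Comb.

Section Main.
Variables (R : realType) (beta : R) (m : nat) (theta : nat -> nat).
Hypothesis b0 : 0 < beta.
Hypothesis b1 : beta <= 1.
Hypothesis lac : lacunary theta.

Definition nb (h : nat) := minn h./2 (Num.truncn (h%:R `^ beta)).+1.
Definition nrb r := nb (hr theta r).

Lemma nrb_le r : (nrb r <= hr theta r)%N.
Proof. rewrite /nrb /nb; lia. Qed.

Definition yv k : R := if yb theta nrb k then 1 else 0.
Definition Xs : nat -> R -> R := fun k => pt (iter m (@antid R) yv k).

Lemma delta_Xs k : delta m Xs k = pt (yv k).
Proof. by rewrite /Xs delta_pt difn_antid. Qed.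

Lemma powR_ge1 (h : nat) : (1 <= h)%N -> 1 <= h%:R `^ beta.
Proof.
move=> h1; have e1 : (1:R) `^ beta = 1 by rewrite powR1.
rewrite -{1}e1.
by apply: ge0_ler_powR; rewrite ?nnegrE ?ler0n ?ler01 ?(ltW b0) // ler1n.
Qed.

Lemma nb_up (h : nat) : (1 <= h)%N -> (nb h)%:R <= 2 * h%:R `^ beta.
Proof.
move=> h1; have hp := powR_ge1 h1.
have ht : (Num.truncn (h%:R `^ beta))%:R <= h%:R `^ beta by rewrite truncn_le powR_ge0.
have : (nb h <= (Num.truncn (h%:R `^ beta)).+1)%N by rewrite /nb geq_minr.
rewrite -(ler_nat R) => hn.
by rewrite (le_trans hn) // -natr1; lra.
Qed.

Lemma hb_le (h : nat) : (1 <= h)%N -> h%:R `^ beta <= h%:R.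
Proof. by move=> h1; apply: ler1_powR; rewrite // ler1n. Qed.

Lemma nb_low (h : nat) : (2 <= h)%N -> h%:R `^ beta <= 4 * (nb h)%:R.
Proof.
move=> h2; rewrite /nb; case: (leqP h./2 (Num.truncn (h%:R `^ beta)).+1) => hc.
  idtac.
  have : (h <= 4 * h./2)%N by lia.
  rewrite -(ler_nat R) natrM => H4.
  by apply: le_trans H4; apply: hb_le; lia.
idtac.
have H := truncnS_gt (h%:R `^ beta).
have H0 := ler0n R (Num.truncn (h%:R `^ beta)).+1.
lra.
Qed.

Lemma nb_low' (h : nat) : (1 <= h)%N -> h%:R `^ beta <= 4 * (h - nb h)%:R.
Proof.
move=> h1; have : (h <= 4 * (h - nb h))%N by rewrite /nb; lia.
rewrite -(ler_nat R) natrM => H4.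
by apply: le_trans H4; apply: hb_le.
Qed.

Lemma bad_up eps r : 0 < eps -> (0 < r)%N ->
  (bad_count theta m Xs (pt 0) eps r <= nrb r)%N.
Proof.
move=> e0 r0; rewrite /bad_count -(count_yb lac nrb_le r0).
apply: sub_count => k /=; rewrite delta_Xs /yv; case: ifP => // _ h.
have := fdist_self (pt (0:R)); lra.
Qed.

Lemma bad_low1 X0 eps r : (0 < r)%N -> eps <= fdist (pt 1) X0 ->
  (nrb r <= bad_count theta m Xs X0 eps r)%N.
Proof.
move=> r0 h; rewrite /bad_count -(count_yb lac nrb_le r0).
by apply: sub_count => k /= hk; rewrite delta_Xs /yv hk.
Qed.

Lemma bad_low0 X0 eps r : (0 < r)%N -> eps <= fdist (pt 0) X0 ->
  (hr theta r - nrb r <= bad_count theta m Xs X0 eps r)%N.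
Proof.
move=> r0 h; rewrite /bad_count -(count_nyb lac nrb_le r0).
by apply: sub_count => k /= hk; rewrite delta_Xs /yv (negbTE hk).
Qed.
End Main.

Lemma nearoo (P : nat -> Prop) : (\forall n \near \oo, P n) <-> exists N, forall n, (N <= n)%N -> P n.
Proof. split => [[N _ HN]|[N HN]]; [exists N; exact: HN| exists N => //]. Qed.



Unset Implicit Arguments.
Theorem theorem2p5 (R : realType) (beta gamma : R) (m : nat) (theta : nat -> nat) :
  0 < beta -> beta < gamma -> gamma <= 1 -> lacunary theta ->
  S_theta beta m theta `<=` S_theta gamma m theta /\
  exists X, S_theta gamma m theta X /\ ~ S_theta beta m theta X.
Proof.
move=> b0 bg g1 lac; split.
  move=> X [HX [X0 [HX0 Hc]]]; split => //; exists X0; split => // eps e0.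
  have /cvgr0Pnorm_lt Hu := Hc eps e0.
  apply/cvgr0Pnorm_lt => e epos.
  have [N1 HN1] := (nearoo _).1 (Hu e epos).
  have [N2 [N20 HN2]] := hr_large lac 1.
  apply/nearoo; exists (maxn N1 N2) => r rN.
  have h1 := HN2 r (leq_trans (leq_maxr _ _) rN).
  have := HN1 r (leq_trans (leq_maxl _ _) rN).
  have Hp : forall x : R, 0 < (hr theta r)%:R `^ x.
    by move=> x; apply: powR_gt0; rewrite ltr0n.
  rewrite !ger0_norm ?divr_ge0 ?powR_ge0 ?ler0n //.
  apply: le_lt_trans; apply: ler_wpM2l; first exact: ler0n.
  rewrite lef_pV2 ?posrE ?Hp //.
  by apply: ler_powR; [rewrite ler1n | exact: ltW].
have b1 : beta <= 1 by apply: le_trans g1; exact: ltW.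
exists (Xs beta m theta); split.
  split; first by move=> k; exact: pt_fuzzy.
  exists (pt 0); split; first exact: pt_fuzzy.
  move=> eps e0; apply/cvgr0Pnorm_lt => e epos.
  pose d := gamma - beta.
  have d0 : 0 < d by rewrite /d subr_gt0.
  pose z := (2 / e) `^ d^-1.
  pose M := (Num.truncn z).+1.
  have hM : 2 / e < M%:R `^ d.
    have -> : 2 / e = z `^ d.
      rewrite /z -powRrM mulVf ?gt_eqF // powRr1 //.
      by apply: divr_ge0 => //; exact: ltW.
    apply: gt0_ltr_powR => //; rewrite ?nnegrE ?powR_ge0 ?ler0n //.
    exact: truncnS_gt.
  have [N [N0 HN]] := hr_large lac (maxn M 1).
  apply/nearoo; exists N => r rN.
  have hM1 := HN r rN.
  have h1 : (1 <= hr theta r)%N by apply: leq_trans hM1; exact: leq_maxr.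
  have hMr : (M <= hr theta r)%N by apply: leq_trans hM1; exact: leq_maxl.
  have r0 : (0 < r)%N by apply: leq_trans rN.
  have Hp : forall x : R, 0 < (hr theta r)%:R `^ x.
    by move=> x; apply: powR_gt0; rewrite ltr0n.
  rewrite ger0_norm ?divr_ge0 ?powR_ge0 ?ler0n //.
  rewrite ltr_pdivrMr ?Hp //.
  have -> : gamma = beta + d by rewrite /d addrC subrK.
  rewrite powRD; last by rewrite pnatr_eq0 -lt0n h1 implybT.
  have hbad := bad_up m b0 b1 lac e0 r0.
  rewrite -(ler_nat R) in hbad.
  have hn := nb_up b0 h1.
  have hq : 2 / e < (hr theta r)%:R `^ d.
    apply: (lt_le_trans hM); apply: ge0_ler_powR; rewrite ?nnegrE ?ler0n ?(ltW d0) //.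
    by rewrite ler_nat.
  move: hq; rewrite ltr_pdivrMr // => hq.
  have hP := Hp beta.
  rewrite /nrb in hbad.
  nra.
move=> [_ [X0 [HX0 Hc]]].
pose L := lower X0 1.
have hd0 := fdist_ge 0 HX0; have hd1 := fdist_ge 1 HX0.
have hcase : 1 / 2 <= fdist (pt 0) X0 \/ 1 / 2 <= fdist (pt 1) X0.
  have := ler_normB (1 - L) (0 - L).
  rewrite opprB addrA subrK subr0 normr1.
  case: (leP (1 / 2) `|0 - L|) => h; [left|right]; rewrite /L in h *; lra.
have e0 : (0:R) < 1 / 2 by lra.
have /cvgr0Pnorm_lt Hu := Hc (1 / 2) e0.
have [N1 HN1] := (nearoo _).1 (Hu (1 / 4) ltac:(lra)).
have [N2 [N20 HN2]] := hr_large lac 2.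
pose r := maxn N1 N2.
have h2 := HN2 r (leq_maxr _ _).
have r0 : (0 < r)%N by apply: leq_trans (leq_maxr _ _).
have := HN1 r (leq_maxl _ _).
have Hp : 0 < (hr theta r)%:R `^ beta by apply: powR_gt0; rewrite ltr0n; lia.
rewrite ger0_norm ?divr_ge0 ?powR_ge0 ?ler0n // ltr_pdivrMr //.
have hlow : (hr theta r)%:R `^ beta <= 4 * (bad_count theta m (Xs beta m theta) X0 (1 / 2) r)%:R.
  case: hcase => hc.
    have := bad_low0 m b0 b1 lac r0 hc; rewrite -(ler_nat R) => hb.
    apply: (le_trans (nb_low' b0 b1 (h:=hr theta r) _)); first lia.
    rewrite /nrb in hb; lra.
  have := bad_low1 m b0 b1 lac r0 hc; rewrite -(ler_nat R) => hb.
  apply: (le_trans (nb_low b0 b1 h2)).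
  rewrite /nrb in hb; lra.
lra.
Qed.
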